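(* $\bigcap_{k=0}^{+\infty}\mathbb P_k=\emptyset$, where $\mathbb P_k=\{p^{(k)}_n:n\in\mathbb N\}$.
   Context: Let $p_n$ denote the $n$-th prime number. Define $p^{(0)}_n=n$ and recursively $p^{(k+1)}_n=p_{p^{(k)}_n}$ for $k\in\mathbb N_0$ (so $\mathbb P_0=\mathbb N$, $\mathbb P_1$ is the set of primes). *)

(* Defs.v *)
From mathcomp Require Import all_boot.

(* Convention: N = {1, 2, 3, ...}; p_1 = 2, p_2 = 3, ... *)

(* smallest prime strictly larger than p; searched in (p, p! + 1], which always
   contains a prime (any prime factor of p! + 1 exceeds p). *)
Definition next_prime (p : nat) : nat :=
  p.+1 + find prime (iota p.+1 (p`!)).

(* nth_prime n = p_n for n >= 1 (nth_prime 0 = 0 is a junk value, never used) *)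
Fixpoint nth_prime (n : nat) : nat :=
  match n with
  | 0 => 0
  | 1 => 2
  | m.+1 => next_prime (nth_prime m)
  end.

Definition iter_prime (k n : nat) : nat := iter k nth_prime n.

Definition Pk (k : nat) : nat -> Prop :=
  fun m => exists n, 0 < n /\ m = iter_prime k n.

Lemma nth_prime_test : [:: nth_prime 1; nth_prime 2; nth_prime 3; nth_prime 4; nth_prime 5] = [:: 2; 3; 5; 7; 11].
Proof. by vm_compute. Qed.

(* Main.v *)
Require Import Defs.
From mathcomp Require Import all_boot.

Lemma nth_prime_gt n : 0 < n -> n < nth_prime n.
Proof.
elim: n => [//|[|m] IH _]; first by [].
have H := IH isT.
change (m.+2 < next_prime (nth_prime m.+1)).
rewrite /next_prime.
apply: leq_trans (leq_addr _ _); by [].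
Qed.

Lemma iter_prime_ge k n : 0 < n -> n + k <= iter_prime k n.
Proof.
move=> n0; elim: k => [|k IH]; first by rewrite addn0.
rewrite /iter_prime iterS -/(iter_prime k n) addnS.
have P : 0 < iter_prime k n by apply: leq_trans IH; rewrite (leq_trans n0) // leq_addr.
idtac.
have Q := nth_prime_gt _ P.
exact: (leq_ltn_trans IH Q).
Qed.

Theorem corollary2 : forall m : nat, ~ (forall k : nat, Pk k m).
Proof.
move=> m H; have [n [n0 E]] := H m.+1.
have := iter_prime_ge m.+1 _ n0; rewrite -E.
by rewrite addnS ltnNge leq_addl.
Qed.
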